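(* Let $0<C<1$, $\epsilon=1/C-1$, $k=b/((1+\epsilon)\ln b)$, and let $b$ be sufficiently large. Let $T$ be a complete tree with branching factor $b$ and let $\sigma$ be a uniformly random proper $k$-coloring of $T$. Then for every vertex $v$ of $T$, the probability that $v$ is not frozen in $\sigma$ is at most $b^{-\epsilon}$. (Leaves are always frozen.)
   Context: For a coloring $\sigma$ of $T$ and a vertex $v$, let $T_v$ be the subtree rooted at $v$ and $L(T_v)$ its leaves. $v$ is frozen in $\sigma$ if every proper coloring $\eta$ of $T$ with $\eta(L(T_v))=\sigma(L(T_v))$ has $\eta(v)=\sigma(v)$. Equivalently, leaves are frozen, and a non-leaf $v$ is frozen iff for every color $c\ne\sigma(v)$ there is a frozen child $w$ of $v$ with $\sigma(w)=c$. *)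

(* Defs.v *)
From mathcomp Require Import all_boot.
From Stdlib Require Import Reals.
Set Implicit Arguments. Unset Strict Implicit. Unset Printing Implicit Defensive.

(* Complete b-ary tree of height h: a vertex is a word over 'I_b of length
   d <= h (the path of child indices from the root). The root is the empty
   word; leaves are the words of length h. *)
Definition vtx (b h : nat) : finType := {d : 'I_h.+1 & d.-tuple 'I_b}.

Definition depth b h (v : vtx b h) : nat := tag v.
Definition word b h (v : vtx b h) : seq 'I_b := tagged v.

Definition is_child b h (u w : vtx b h) : bool :=
  (depth u == (depth w).+1) && prefix (word w) (word u).

Definition in_subtree b h (v u : vtx b h) : bool := prefix (word v) (word u).

Definition is_leaf b h (u : vtx b h) : bool := depth u == h.

Definition coloring b h k := {ffun vtx b h -> 'I_k}.

Definition proper b h k (s : coloring b h k) : bool :=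
  [forall u, forall w, is_child u w ==> (s u != s w)].

Definition frozen b h k (s : coloring b h k) (v : vtx b h) : bool :=
  [forall eta : coloring b h k,
     proper eta ==>
     [forall u, (in_subtree v u && is_leaf u) ==> (eta u == s u)] ==>
     (eta v == s v)].

Definition prob_not_frozen (b h k : nat) (v : vtx b h) : R :=
  (INR #|[set s : coloring b h k | proper s && ~~ frozen s v]| /
   INR #|[set s : coloring b h k | proper s]|)%R.

Definition num_colors (eps : R) (b : nat) : nat :=
  Z.to_nat (Int_part (INR b / ((1 + eps) * ln (INR b)))).
Arguments prob_not_frozen : clear implicits.

(* Main.v *)
Require Import Defs.
From Stdlib Require Import Reals Lra Lia ZArith.
Open Scope R_scope.

Lemma exp_mono x y : x <= y -> exp x <= exp y.
Proof. intros [H|H]; [left; apply exp_increasing; auto | subst; lra]. Qed.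

Lemma ln_mono x y : 0 < x -> x <= y -> ln x <= ln y.
Proof. intros Hx [H|H]; [left; apply ln_increasing; auto | subst; lra]. Qed.

Lemma exp_pow_n z (n : nat) : exp z ^ n = exp (z * INR n).
Proof.
induction n as [|n IH]; simpl. rewrite Rmult_0_r, exp_0; lra.
rewrite IH. destruct n; simpl. rewrite Rmult_0_r, exp_0, Rmult_1_r, Rmult_1_r; lra.
rewrite <- exp_plus. f_equal. ring.
Qed.

Lemma exp_sq t : 0 <= t -> t * t / 4 <= exp t.
Proof.
intro Ht. replace t with (t/2 + t/2) at 3 by field.
rewrite exp_plus. pose proof (exp_ineq1_le (t/2)).
apply Rle_trans with ((1 + t/2) * (1 + t/2)); [nra|].
apply Rmult_le_compat; lra.
Qed.

Lemma core K p (n : nat) (X : R) :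
  1 <= K -> 0 <= p <= 1 ->
  K * (K - 1 + p) ^ n <= K ^ n * (K * exp (- (1 - p) * INR n / K)).
Proof.
intros HK Hp.
replace (K - 1 + p) with (K * (1 - (1 - p) / K)) by (field; repeat split; lra).
rewrite Rpow_mult_distr.
replace (- (1 - p) * INR n / K) with (- ((1 - p) / K) * INR n) by (field; repeat split; lra).
rewrite <- exp_pow_n.
assert (0 <= (1-p)/K <= 1).
{ split. unfold Rdiv; apply Rmult_le_pos; [lra| left; apply Rinv_0_lt_compat; lra].
  apply Rmult_le_reg_r with K; [lra|]. unfold Rdiv. rewrite Rmult_assoc, Rinv_l; lra. }
assert (0 <= 1 - (1-p)/K) by lra.
assert (1 - (1-p)/K <= exp (-((1-p)/K))) by (pose proof (exp_ineq1_le (-((1-p)/K))); lra).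
assert ((1 - (1-p)/K)^n <= exp (-((1-p)/K))^n) by (apply pow_incr; lra).
assert (0 <= K^n) by (apply pow_le; lra).
assert (K^n * (1 - (1-p)/K)^n <= K^n * exp (-((1-p)/K))^n) by (apply Rmult_le_compat_l; lra).
assert (K * (K^n * (1 - (1-p)/K)^n) <= K * (K^n * exp (-((1-p)/K))^n)) by (apply Rmult_le_compat_l; lra).
lra.
Qed.

Lemma main_num e L K p n :
  0 < e -> 3 <= L -> p = exp (- e * L) -> (1 + e) * L <= exp (e * L) ->
  INR n = exp L -> 1 <= K -> K <= exp L / ((1 + e) * L) ->
  K * exp (- (1 - p) * INR n / K) <= p.
Proof.
intros He HL Hpd Hal Hn HK HKq.
set (a := 1 + e) in *.
assert (Hp0 : 0 < p) by (rewrite Hpd; apply exp_pos).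
assert (HpaL : p * (a * L) <= 1).
{ rewrite Hpd. replace 1 with (exp (- e * L) * exp (e * L)) by (rewrite <- exp_plus; replace (- e * L + e * L) with 0 by ring; apply exp_0).
  apply Rmult_le_compat_l; [left; apply exp_pos | lra]. }
assert (Hp1 : p <= 1).
{ rewrite Hpd. rewrite <- exp_0. apply exp_mono. nra. }
assert (Ha : 0 < a) by (unfold a; lra).
assert (HaL : 0 < a * L) by nra.
assert (HxL : 0 < exp L) by apply exp_pos.
assert (H1 : - (1 - p) * INR n / K <= - (1 - p) * (a * L)).
{ rewrite Hn. unfold Rdiv.
  assert (a * L <= exp L * / K).
  { apply Rmult_le_reg_r with K; [lra|]. replace (exp L * / K * K) with (exp L) by (field; repeat split; lra).
    unfold Rdiv in HKq.
    assert (K * (a * L) <= exp L * / (a * L) * (a * L)) by (apply Rmult_le_compat_r; lra).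
    replace (exp L * / (a * L) * (a * L)) with (exp L) in H by (field; repeat split; lra). rewrite Rmult_comm; exact H. }
  assert ((1-p)*(a*L) <= (1-p)*(exp L * /K)) by (apply Rmult_le_compat_l; lra).
  replace (- (1 - p) * exp L * / K) with (- ((1-p)*(exp L * /K))) by ring. lra. }
apply Rle_trans with (K * exp (- (1 - p) * (a * L))).
{ apply Rmult_le_compat_l; [lra|]. apply exp_mono; exact H1. }
apply Rle_trans with (exp L / (a * L) * exp (- (1 - p) * (a * L))).
{ apply Rmult_le_compat_r; [left; apply exp_pos| exact HKq]. }
assert (E : exp L / (a * L) * exp (- (1 - p) * (a * L)) = exp (- e * L) * (exp (p * (a * L)) / (a * L))).
{ assert (E1 : exp L * exp (- (1 - p) * (a * L)) = exp (- e * L) * exp (p * (a * L))).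
  { rewrite <- !exp_plus. f_equal. unfold a. ring. }
  replace (exp L / (a * L) * exp (- (1 - p) * (a * L))) with
    ((exp L * exp (- (1 - p) * (a * L))) * / (a * L)) by (unfold Rdiv; ring).
  rewrite E1. unfold Rdiv. ring. }
rewrite E.
rewrite <- Hpd.
assert (exp (p * (a * L)) <= a * L).
{ apply Rle_trans with (exp 1); [apply exp_mono; lra|].
  pose proof exp_le_3. unfold a; nra. }
assert (exp (p * (a * L)) / (a * L) <= 1).
{ unfold Rdiv. apply Rmult_le_reg_r with (a * L); [lra|].
  rewrite Rmult_assoc, Rinv_l, Rmult_1_r, Rmult_1_l by lra. lra. }
assert (0 <= exp (p * (a * L)) / (a * L)).
{ unfold Rdiv. apply Rmult_le_pos; [left; apply exp_pos | left; apply Rinv_0_lt_compat; lra]. }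
nra.
Qed.

Lemma num_final (C : R) : 0 < C < 1 ->
  exists B : nat, forall b : nat, (B <= b)%nat ->
    let k := num_colors (1 / C - 1) b in
    (2 <= k)%nat /\
    INR (Nat.pred k) * (INR (k - 2) + Rpower (INR b) (- (1 / C - 1))) ^ b <=
    Rpower (INR b) (- (1 / C - 1)) * INR (Nat.pred k) ^ b.
Proof.
intros HC. set (e := 1 / C - 1).
assert (He : 0 < e).
{ unfold e. assert (1 < 1 / C). { apply Rmult_lt_reg_r with C; [lra|]. unfold Rdiv. rewrite Rmult_assoc, Rinv_l; lra. } lra. }
set (a := 1 + e).
assert (Ha : 0 < a) by (unfold a; lra).
set (M := Rmax 3 (Rmax (4 * a / (e * e)) (12 * a))).
assert (HM3 : 3 <= M) by (unfold M; apply Rmax_l).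
assert (HM1 : 4 * a / (e * e) <= M) by (unfold M; eapply Rle_trans; [apply Rmax_l | apply Rmax_r]).
assert (HM2 : 12 * a <= M) by (unfold M; eapply Rle_trans; [apply Rmax_r | apply Rmax_r]).
pose proof (archimed (exp M)) as [Hup _].
assert (Hup0 : (0 <= up (exp M))%Z).
{ apply le_IZR. pose proof (exp_pos M). lra. }
exists (Z.to_nat (up (exp M))).
intros b Hb k.
assert (HbM : exp M < INR b).
{ apply Rlt_le_trans with (INR (Z.to_nat (up (exp M)))).
  - rewrite INR_IZR_INZ, Z2Nat.id by exact Hup0. lra.
  - apply le_INR; exact Hb. }
set (x := INR b) in *.
assert (Hx : 0 < x) by (pose proof (exp_pos M); lra).
set (L := ln x).
assert (HL : M <= L).
{ unfold L. rewrite <- (ln_exp M). apply ln_mono; [apply exp_pos | lra]. }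
assert (HxL : x = exp L) by (unfold L; rewrite exp_ln; auto).
assert (HL0 : 0 < L) by lra.
assert (Hal : a * L <= exp (e * L)).
{ apply Rle_trans with (e * L * (e * L) / 4); [|apply exp_sq; nra].
  assert (4 * a <= e * e * L).
  { apply Rmult_le_reg_r with (/ (e * e)). apply Rinv_0_lt_compat; nra.
    replace (e * e * L * / (e * e)) with L by (field; lra). unfold Rdiv in HM1. lra. }
  nra. }
set (y := x / ((1 + e) * L)).
assert (Hy : 3 <= y).
{ unfold y. apply Rmult_le_reg_r with ((1 + e) * L). nra.
  unfold Rdiv. rewrite Rmult_assoc, Rinv_l, Rmult_1_r by (fold a; nra).
  rewrite HxL. apply Rle_trans with (L * L / 4); [|apply exp_sq; lra]. fold a. nra. }
destruct (base_Int_part y) as [Hz1 Hz2].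
assert (Hz : (2 <= Int_part y)%Z).
{ assert (1 < IZR (Int_part y)) by lra. apply lt_IZR in H. lia. }
assert (Hk : INR k = IZR (Int_part y)).
{ unfold k, num_colors. fold e x L. fold y. rewrite INR_IZR_INZ, Z2Nat.id by lia. reflexivity. }
assert (Hk2 : (2 <= k)%nat).
{ unfold k, num_colors. fold e x L y. lia. }
split; [exact Hk2|].
assert (HKp : INR (Nat.pred k) = INR k - 1).
{ rewrite <- (Nat.sub_1_r k), minus_INR by lia. simpl; lra. }
assert (HK2 : INR (k - 2) = INR (Nat.pred k) - 1).
{ rewrite HKp, minus_INR by lia. simpl; lra. }
set (K := INR (Nat.pred k)) in *.
set (p := Rpower x (- e)).
assert (Hp : p = exp (- e * L)) by reflexivity.
assert (Hp01 : 0 <= p <= 1).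
{ rewrite Hp. split. left; apply exp_pos. rewrite <- exp_0. apply exp_mono. nra. }
rewrite HK2.
assert (HK1 : 1 <= K) by (rewrite HKp, Hk; lra).
eapply Rle_trans. apply (core K p b 0 HK1 Hp01).
rewrite Rmult_comm. apply Rmult_le_compat_r. apply pow_le; lra.
apply (main_num e L K p b He); try lra; auto.
rewrite <- HxL. rewrite HKp, Hk. fold y. lra.
Qed.

Close Scope R_scope.
From mathcomp Require Import all_boot zify.
From Stdlib Require Import Reals Lra.


Section S.
Variables b k : nat.
Fixpoint TC (m : nat) : finType :=
  if m is m'.+1 then ('I_k * {ffun 'I_b -> TC m'})%type else 'I_k.
Definition rc m : TC m -> 'I_k :=
  match m return TC m -> 'I_k with 0 => fun t => t | m'.+1 => fun t => t.1 end.
Fixpoint prop m : TC m -> bool :=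
  match m return TC m -> bool with 0 => fun _ => true
  | m'.+1 => fun t => [forall i, prop m' (t.2 i) && (rc m' (t.2 i) != t.1)] end.
Fixpoint rfr m : TC m -> bool :=
  match m return TC m -> bool with 0 => fun _ => true
  | m'.+1 => fun t => [forall c, (c != t.1) ==> [exists i, (rc m' (t.2 i) == c) && rfr m' (t.2 i)]] end.

Set Implicit Arguments. Unset Strict Implicit. Unset Printing Implicit Defensive.
Lemma card_ffun_all (T : finType) (Q : pred T) :
  #|[pred f : {ffun 'I_b -> T} | [forall i, Q (f i)]]| = expn #|Q| b.
Proof.
rewrite -[in RHS](card_ord b) -card_ffun_on; apply: eq_card => f.
rewrite !inE; apply/forallP/ffun_onP => H x; by have := H x.
Qed.

Lemma card_pair (T : finType) (a : 'I_k) (P : pred T) :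
  #|[pred x : 'I_k * T | (x.1 == a) && P x.2]| = #|P|.
Proof.
rewrite -(mul1n #|P|) -(card1 a) -cardX; apply: eq_card => -[x y] /=.
by rewrite !inE.
Qed.

Lemma card_part m c (H : forall d, #|[pred t : TC m | prop m t && (rc m t == d)]| = c)
  (P : pred 'I_k) : #|[pred t : TC m | prop m t && P (rc m t)]| = #|P| * c.
Proof.
rewrite -sum1_card (partition_big (rc m) P) /=; last by move=> i /andP[].
rewrite -sum_nat_const; apply: eq_bigr => d Pd.
rewrite -(H d) -sum1_card; apply: eq_bigl => t; rewrite !inE.
by case: eqP => [->|]; rewrite ?Pd ?andbT ?andbF.
Qed.

Fixpoint nn m := if m is m'.+1 then expn ((k.-1) * nn m') b else 1.

Lemma Ncount m d : #|[pred t : TC m | prop m t && (rc m t == d)]| = nn m.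
Proof.
elim: m d => [|m IH] d /=.
  by rewrite -(card1 d); apply: eq_card => t.
have E : #|[pred t : TC m | prop m t && (rc m t != d)]| = k.-1 * nn m.
  by rewrite -[k in k.-1](card_ord k) -(cardC1 d) -(card_part IH (predC1 d)).
rewrite -E -(card_ffun_all [pred t : TC m | prop m t && (rc m t != d)]).
rewrite -[RHS](card_pair d); apply: eq_card => -[a f] /=; rewrite !inE andbC.
case: eqP => //= ->.
by [].
Qed.


Lemma card_sumb (T : finType) (A : pred T) : #|A| = \sum_i ((i \in A) : nat).
Proof.
rewrite -sum1_card big_mkcond /=; apply: eq_bigr => i _; by case: (i \in A).
Qed.

Lemma sum_const_pred' (I : finType) (Q : pred I) n : \sum_(i | Q i) n = #|Q| * n.
Proof. by rewrite -sum_nat_const; apply: eq_bigl. Qed.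

Lemma INR_sum_le (I : finType) (P : pred I) (F : I -> nat) (X : R) :
  (forall i, P i -> (INR (F i) <= X)%R) ->
  (INR (\sum_(i | P i) F i) <= INR #|P| * X)%R.
Proof.
move=> H; rewrite -sum1_card.
apply: (big_ind2 (fun (n c : nat) => (INR n <= INR c * X)%R)).
- rewrite /=; lra.
- move=> n1 n2 c1 c2 h1 h2; rewrite !plus_INR; lra.
- move=> i Pi; rewrite /= Rmult_1_l; exact: H.
Qed.

Lemma expn_pow a n : expn a n = Nat.pow a n.
Proof. elim: n => //= n IH. rewrite expnS IH. reflexivity. Qed.

Lemma INR_expn a n : INR (expn a n) = (INR a ^ n)%R.
Proof. by rewrite expn_pow pow_INR. Qed.

Variable p : R.
Hypothesis Hp : (0 <= p)%R.
Hypothesis Hk : 2 <= k.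
Hypothesis Hnum : (INR (k.-1) * (INR (k - 2) + p) ^ b <= p * INR (k.-1) ^ b)%R.

Lemma Fbound m a :
  (INR #|[pred t : TC m | prop m t && (rc m t == a) && ~~ rfr m t]| <= p * INR (nn m))%R.
Proof.
elim: m a => [|m IH] a.
  rewrite (eq_card0 (A := [pred t : TC 0 | _])); last by move=> t; rewrite !inE andbF.
  rewrite /=; lra.
set S := [pred t : TC m.+1 | _].
pose Qa := [pred t : TC m | prop m t && (rc m t != a)].
pose G c := [pred t | Qa t && ~~ ((rc m t == c) && rfr m t)].
pose Sc c := [pred x : TC m.+1 | (x.1 == a) && [forall i, G c (x.2 i)]].
have step1 : #|S| <= \sum_(c | c != a) expn #|G c| b.
  have -> : \sum_(c | c != a) expn #|G c| b = \sum_(c | c != a) #|Sc c|.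
    apply: eq_bigr => c _; rewrite -card_ffun_all -(card_pair a); exact: eq_card.
  rewrite card_sumb.
  have -> : \sum_(c | c != a) #|Sc c| = \sum_(c | c != a) \sum_x ((x \in Sc c) : nat).
    by apply: eq_bigr => c _; rewrite card_sumb.
  rewrite exchange_big /=; apply: leq_sum => -[a' f] _.
  rewrite [_ \in S]inE /=.
  case H: (_ && _ && _) => //.
  move: H => /andP[/andP[Hpr /eqP Ea] Hnf]; subst a'.
  move: Hnf; rewrite negb_forall => /existsP[c]; rewrite negb_imply negb_exists.
  case/andP=> ca /forallP Hc.
  rewrite (bigD1 c) //= inE eqxx /=.
  suff -> : [forall i, prop m (f i) && (rc m (f i) != a) &&
     ~~ ((rc m (f i) == c) && rfr m (f i))] by [].
  apply/forallP => i; have /andP[-> ->] := forallP Hpr i; by rewrite Hc.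
have step2 : forall c, c != a -> #|G c| <=
    (k - 2) * nn m + #|[pred t : TC m | prop m t && (rc m t == c) && ~~ rfr m t]|.
  move=> c ca.
  pose A := [pred t : TC m | prop m t && [pred d | (d != a) && (d != c)] (rc m t)].
  pose B := [pred t : TC m | prop m t && (rc m t == c) && ~~ rfr m t].
  have cA : #|A| = (k - 2) * nn m.
    rewrite (card_part (Ncount m)); congr (_ * _).
    have := cardC (pred2 a c); rewrite card2 card_ord eq_sym ca => Ek.
    have -> : k - 2 = #|[predC pred2 a c]| by rewrite -[X in X - 2]Ek addKn. apply: eq_card => d; by rewrite !inE negb_or.
  rewrite -cA; apply: (leq_trans (n := #|[predU A & B]|)).
    apply: subset_leq_card; apply/subsetP => t; rewrite !inE.
    case/andP => /andP[-> ->] /=; case: eqP => //= ->; by rewrite ca.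
  by rewrite -cardUI leq_addr.
have Hn0 := pos_INR (nn m).
apply: (Rle_trans _ (INR (\sum_(c | c != a) expn #|G c| b))).
  by apply: le_INR; apply/leP.
apply: (Rle_trans _ _ _ (INR_sum_le (P := fun c => c != a)
   (X := ((INR (k - 2) + p) * INR (nn m)) ^ b)%R _)).
  move=> c ca; rewrite INR_expn; apply: pow_incr; split; first exact: pos_INR.
  apply: (Rle_trans _ _ _ (le_INR _ _ (leP (step2 c ca)))).
  rewrite plus_INR mult_INR; have := IH c; lra.
have -> : #|(fun c => c != a) : pred 'I_k| = k.-1.
  by rewrite -[in RHS](card_ord k) -(cardC1 a); apply: eq_card.
rewrite /= INR_expn mult_INR !Rpow_mult_distr -Rmult_assoc -Rmult_assoc.
apply: Rmult_le_compat_r; first exact: pow_le.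
exact: Hnum.
Qed.

Lemma card_rc m (Q : pred (TC m)) :
  #|[pred t : TC m | Q t]| = \sum_d #|[pred t : TC m | Q t && (rc m t == d)]|.
Proof.
rewrite -sum1_card (partition_big (rc m) predT) //.
apply: eq_bigr => d _; rewrite -sum1_card; exact: eq_bigl.
Qed.

Lemma TCbound m :
  (INR #|[pred t : TC m | prop m t && ~~ rfr m t]| <= p * INR #|[pred t : TC m | prop m t]|)%R.
Proof.
have E2 : #|[pred t : TC m | prop m t]| = #|(predT : pred 'I_k)| * nn m.
  rewrite card_rc -sum_const_pred'; apply: eq_bigr => d _; rewrite -(Ncount m d).
  by apply: eq_card => t; rewrite !inE.
rewrite E2 mult_INR card_rc.
apply: (Rle_trans _ _ _ (INR_sum_le (P := predT) (X := (p * INR (nn m))%R) _)).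
  move=> d _; apply: Rle_trans (Fbound m d); apply: Req_le; congr INR; apply: eq_card => t.
  by rewrite !inE andbAC.
rewrite -Rmult_assoc (Rmult_comm (INR _) p) Rmult_assoc; exact: Rle_refl.
Qed.
End S.

Unset Implicit Arguments.
Section Tree.
Variables b h k : nat.

Definition root : vtx b h := existT (fun d : 'I_h.+1 => d.-tuple 'I_b) ord0 [tuple].
Definition mkv (w : seq 'I_b) : vtx b h := odflt root [pick u : vtx b h | word u == w].
Definition Sw (s : coloring b h k) w := s (mkv w).

Fixpoint restrW (s : coloring b h k) m (w : seq 'I_b) : TC b k m :=
  match m return TC b k m with
  | 0 => Sw s w
  | m'.+1 => (Sw s w, [ffun i => restrW s m' (rcons w i)])
  end.

Fixpoint get m : TC b k m -> seq 'I_b -> 'I_k :=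
  match m return TC b k m -> seq 'I_b -> 'I_k with
  | 0 => fun t _ => t
  | m'.+1 => fun t r => match r with [::] => t.1 | i :: r' => get m' (t.2 i) r' end
  end.

Set Implicit Arguments.
Lemma word_size (u : vtx b h) : size (word u) = depth u.
Proof. by rewrite /word size_tuple. Qed.

Lemma depth_le (u : vtx b h) : depth u <= h.
Proof. by rewrite /depth -ltnS ltn_ord. Qed.

Lemma word_inj : injective (@word b h).
Proof.
move=> [d t] [d' t'] /= E.
have Ed : d = d'.
  by apply: val_inj; rewrite /= -(size_tuple t) -(size_tuple t'); congr size.
subst d'; congr existT; exact: val_inj.
Qed.

Lemma mkvK w : size w <= h -> word (mkv w) = w.
Proof.
move=> Hw; rewrite /mkv; case: pickP => [u /eqP // | none].
have Hw' : size w < h.+1 by [].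
have := none (existT (fun d : 'I_h.+1 => d.-tuple 'I_b) (Ordinal Hw') (in_tuple w)).
by rewrite /= /word /= eqxx.
Qed.

Lemma mkv_word u : mkv (word u) = u.
Proof. by apply: word_inj; rewrite mkvK // word_size depth_le. Qed.

Lemma child_of (u p : vtx b h) i : word u = rcons (word p) i -> is_child u p.
Proof.
move=> E; rewrite /is_child -!word_size E size_rcons eqxx /=.
exact: prefix_rcons.
Qed.

Lemma childP (u p : vtx b h) : is_child u p -> exists i, word u = rcons (word p) i.
Proof.
rewrite /is_child => /andP[/eqP Hs /prefixP [r E]].
have {}E : word u = word p ++ (r : seq 'I_b) := E.
have := word_size u; rewrite E size_cat word_size Hs.
case: r E => [|i [|j r]] E /=; rewrite ?addn0 ?addn1 ?addnS.
- move=> H; exfalso; lia.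
- by move=> _; exists i; rewrite cats1.
- move=> H; exfalso; lia.
Qed.

Lemma properP (s : coloring b h k) :
  Defs.proper s -> forall u p, is_child u p -> s u != s p.
Proof. by move=> /forallP H u p; have /forallP/(_ p)/implyP := H u. Qed.

Lemma properI (s : coloring b h k) :
  (forall u p, is_child u p -> s u != s p) -> Defs.proper s.
Proof. by move=> H; apply/forallP => u; apply/forallP => p; apply/implyP; apply: H. Qed.

Lemma rc_restr s m w : rc b k m (restrW s m w) = Sw s w.
Proof. by case: m. Qed.

Lemma get_nil m t : get m t [::] = rc b k m t.
Proof. by case: m t. Qed.

Lemma get_restr s m w r : size r <= m -> get m (restrW s m w) r = Sw s (w ++ r).
Proof.
elim: m w r => [|m IH] w [|i r] //=; rewrite ?cats0 //.
by rewrite ltnS ffunE => Hr; rewrite IH // cat_rcons.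
Qed.

Lemma get_ext m t t' : (forall r, size r <= m -> get m t r = get m t' r) -> t = t'.
Proof.
elim: m t t' => [|m IH] t t' H; first exact: (H [::]).
case: t t' H => [a f] [a' f'] H.
have -> : a = a' by exact: (H [::]).
congr pair; apply/ffunP => i; apply: IH => r Hr; exact: (H (i :: r)).
Qed.

Lemma prop_get m t r i : prop b k m t -> size r < m -> get m t (rcons r i) != get m t r.
Proof.
elim: m t r => [|m IH] t r //=.
move=> /forallP Hp; case: r => [|j r] /=.
  by move=> _; rewrite get_nil; have /andP[_ ->] := Hp i.
rewrite ltnS => Hr; have /andP[Pj _] := Hp j; exact: IH.
Qed.

Lemma prop_restr s m w : Defs.proper s -> size w + m <= h -> prop b k m (restrW s m w).
Proof.
move=> Ps; elim: m w => [|m IH] w //= Hw.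
apply/forallP => i; rewrite ffunE IH ?size_rcons ?addSnnS //= rc_restr.
have Hw1 : size w <= h by apply: leq_trans Hw; apply: leq_addr.
have Hw2 : size (rcons w i) <= h by rewrite size_rcons; apply: leq_trans Hw; rewrite addnS ltnS leq_addr.
apply: properP Ps _ _ _; apply: (child_of (i := i)); rewrite !mkvK //.
Qed.

Lemma sound s eta m w : Defs.proper eta -> size w + m = h -> rfr b k m (restrW s m w) ->
  (forall u, prefix w (word u) -> is_leaf u -> eta u = s u) -> eta (mkv w) = s (mkv w).
Proof.
move=> Pe; elim: m w => [|m IH] w Hw.
  move=> _ Hl; rewrite addn0 in Hw; apply: Hl; rewrite ?mkvK ?Hw ?prefix_refl //.
  by rewrite /is_leaf -word_size mkvK Hw.
move=> /= /forallP Hr Hl; apply/eqP; apply: contraT => Hne.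
have := Hr (eta (mkv w)); rewrite /= {1}/Sw Hne /= => /existsP[i /andP[/eqP Ec Hri]].
have Hw2 : size (rcons w i) <= h by rewrite size_rcons -Hw addnS ltnS leq_addr.
have Hw1 : size w <= h by rewrite -Hw leq_addr.
have := IH (rcons w i); rewrite size_rcons addSnnS => /(_ Hw).
rewrite ffunE in Hri Ec => /(_ Hri).
have Hl' : forall u, prefix (rcons w i) (word u) -> is_leaf u -> eta u = s u.
  by move=> u Hu; apply: Hl; apply: prefix_trans Hu; apply: prefix_rcons.
move=> /(_ Hl') E.
have := properP Pe (child_of (u := mkv (rcons w i)) (p := mkv w) (i := i) _).
by rewrite !mkvK // E -Ec rc_restr /Sw eqxx => /(_ erefl).
Qed.

Lemma rfr_frozen (s : coloring b h k) v :
  rfr b k (h - depth v) (restrW s (h - depth v) (word v)) -> frozen s v.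
Proof.
move=> Hr; apply/forallP => eta; apply/implyP => Pe; apply/implyP => /forallP Hl.
have := sound Pe _ Hr; rewrite mkv_word => -> //.
  by rewrite word_size subnKC // depth_le.
by move=> u Hu Hlu; apply/eqP; have /implyP := Hl u; apply; rewrite /in_subtree Hu.
Qed.

End Tree.
Arguments restrW {b h k}.
Arguments get {b k}.
Arguments mkv {b h}.
Arguments Sw {b h k}.

Lemma prefix_rcons_inv (T : eqType) (w x : seq T) i :
  prefix w (rcons x i) -> ~~ prefix w x -> w = rcons x i.
Proof.
rewrite !prefixE => /eqP E Hn; case: (leqP (size w) (size x)) => H.
  by move: E; rewrite -cats1 takel_cat // => E; rewrite E eqxx in Hn.
have Hs : size w = size (rcons x i).
  have := congr1 size E; rewrite size_take size_rcons.
  case: ltnP => //; lia.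
by move: E; rewrite Hs take_size.
Qed.

Lemma prefix_dropE (T : eqType) (w x : seq T) : prefix w x -> x = w ++ drop (size w) x.
Proof. by move=> /prefixP [r ->]; rewrite drop_size_cat. Qed.

Definition sw k (x y z : 'I_k) := if z == x then y else if z == y then x else z.
Lemma swK k (x y z : 'I_k) : sw y x (sw x y z) = z.
Proof.
rewrite /sw; case: (eqVneq z x) => [->|zx]; first by rewrite !eqxx.
case: (eqVneq z y) => [Ezy|zy]. subst z.
  case: eqP => [E|_]; [by rewrite E eqxx in zx | by rewrite eqxx].
by rewrite (negbTE zy) (negbTE zx).
Qed.
Lemma sw_inj k (x y : 'I_k) : injective (sw x y).
Proof. exact: can_inj (swK x y). Qed.
Lemma swL k (x y : 'I_k) : sw x y x = y.
Proof. by rewrite /sw eqxx. Qed.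

Lemma sum_const_pred (I : finType) (Q : pred I) n : \sum_(i | Q i) n = #|Q| * n.
Proof. by rewrite -sum_nat_const; apply: eq_bigl. Qed.

Section Transfer.
Variables b h k m : nat.
Variable w : seq 'I_b.
Hypothesis Hw : size w + m = h.

Definition Rr (s : coloring b h k) := restrW s m w.

Definition glue (t t' : TC b k m) (s : coloring b h k) : coloring b h k :=
  [ffun u => if prefix w (word u) then get m t' (drop (size w) (word u))
             else sw (rc b k m t) (rc b k m t') (s u)].

Lemma size_word_le (u : vtx b h) : size (word u) <= h.
Proof. by rewrite word_size depth_le. Qed.

Lemma glue_restr t t' s : Rr (glue t t' s) = t'.
Proof.
apply: get_ext => r Hr; rewrite get_restr // /Sw ffunE mkvK ?prefix_prefix ?drop_size_cat //.
by rewrite size_cat -Hw leq_add2l.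
Qed.

Lemma glueK t t' s : Rr s = t -> glue t' t (glue t t' s) = s.
Proof.
move=> Hs; apply/ffunP => u; rewrite !ffunE; case: ifP => Hp; last (rewrite Hp; exact: swK).
have Eu := prefix_dropE Hp.
set r := drop (size w) (word u) in Eu *.
have Hr : size r <= m.
  by rewrite -(leq_add2l (size w)) Hw -size_cat -Eu size_word_le.
by rewrite -Hs get_restr // /Sw -Eu mkv_word.
Qed.

Lemma glue_proper t t' s : Defs.proper s -> Rr s = t -> prop b k m t' -> Defs.proper (glue t t' s).
Proof.
move=> Ps Hs Pt'; apply: properI => u p Hc.
have [i E] := childP Hc.
have Hup : prefix (word p) (word u) by rewrite E prefix_rcons.
rewrite !ffunE; case Hpp: (prefix w (word p)).
  have Hpu : prefix w (word u) by apply: prefix_trans Hup.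
  rewrite Hpu.
  have Ep := prefix_dropE Hpp.
  set r := drop (size w) (word p) in Ep *.
  have -> : drop (size w) (word u) = rcons r i by rewrite E Ep rcons_cat drop_size_cat.
  apply: prop_get => //.
  by rewrite -(ltn_add2l (size w)) Hw -size_cat -Ep -(size_rcons _ i) -E size_word_le.
case Hpu: (prefix w (word u)).
  have Ew := prefix_rcons_inv (i := i) (x := word p) (w := w).
  rewrite -E in Ew; have {}Ew := Ew Hpu (negbT Hpp).
  rewrite -Ew drop_size get_nil -{1}(swL (rc b k m t) (rc b k m t')) (inj_eq (@sw_inj _ _ _)).
  by rewrite -Hs rc_restr /Sw Ew mkv_word; apply: properP.
by rewrite (inj_eq (@sw_inj _ _ _)); apply: properP.
Qed.

Definition fib t := [pred s : coloring b h k | Defs.proper s && (Rr s == t)].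

Lemma fib_le t t' : prop b k m t -> prop b k m t' -> #|fib t| <= #|fib t'|.
Proof.
move=> Pt Pt'.
rewrite -(@card_in_imset _ _ (glue t t') (fib t)).
  apply: subset_leq_card; apply/subsetP => s' /imsetP [s Hs ->].
  move: Hs; rewrite !inE => /andP[Ps /eqP Hs].
  by rewrite glue_proper // glue_restr eqxx.
move=> s1 s2; rewrite !inE => /andP[_ /eqP H1] /andP[_ /eqP H2] E.
by rewrite -(glueK t' H1) E glueK.
Qed.

Lemma count_P (P : pred (TC b k m)) :
  #|[pred s : coloring b h k | Defs.proper s && P (Rr s)]| = \sum_(t | prop b k m t && P t) #|fib t|.
Proof.
rewrite -sum1_card (partition_big Rr (fun t => prop b k m t && P t)) /=.
  apply: eq_bigr => t /andP[_ Pt]; rewrite -sum1_card; apply: eq_bigl => s.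
  by rewrite !inE; case: eqP => [->|]; rewrite ?Pt ?andbT ?andbF.
move=> s; rewrite inE => /andP[Ps ->]; rewrite prop_restr ?Hw //.
Qed.

End Transfer.

Lemma transfer_bound b h k m (w : seq 'I_b) p : size w + m = h -> (0 <= p)%R ->
  (INR #|[pred t : TC b k m | prop b k m t && ~~ rfr b k m t]|
     <= p * INR #|[pred t : TC b k m | prop b k m t]|)%R ->
  (INR #|[pred s : coloring b h k | Defs.proper s && ~~ rfr b k m (@Rr b h k m w s)]|
     <= p * INR #|[pred s : coloring b h k | Defs.proper s]|)%R.
Proof.
move=> Hw Hp HT.
have -> : #|[pred s : coloring b h k | Defs.proper s && ~~ rfr b k m (@Rr b h k m w s)]|
   = \sum_(t | prop b k m t && ~~ rfr b k m t) #|@fib b h k m w t|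
  := count_P Hw (fun t => ~~ rfr b k m t).
have -> : #|[pred s : coloring b h k | Defs.proper s]|
   = \sum_(t | prop b k m t && predT t) #|@fib b h k m w t|.
  rewrite -(count_P Hw predT); apply: eq_card => s; by rewrite !inE andbT.
case: (pickP [pred t : TC b k m | prop b k m t]) => [t0 Pt0 | none].
  have HK : forall t, prop b k m t -> #|@fib b h k m w t| = #|@fib b h k m w t0|.
    by move=> t Pt; apply/eqP; rewrite eqn_leq !(fib_le Hw).
  rewrite [X in (INR X <= _)%R](eq_bigr (fun _ => #|@fib b h k m w t0|)); last by move=> t /andP[Pt _]; rewrite HK.
  rewrite [X in (_ <= _ * INR X)%R](eq_bigr (fun _ => #|@fib b h k m w t0|)); last by move=> t /andP[Pt _]; rewrite HK.
  rewrite !sum_const_pred' !mult_INR -Rmult_assoc.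
  apply: Rmult_le_compat_r; first exact: pos_INR.
  apply: Rle_trans HT _; apply: Req_le; congr (_ * INR _)%R.
  by apply: eq_card => t; rewrite -topredE /= unfold_in /= andbT.
have Hn : forall t, prop b k m t = false by move=> t; have := none t.
rewrite big_pred0; last by move=> t; rewrite Hn.
rewrite big_pred0; last by move=> t; rewrite Hn.
rewrite /=; lra.
Qed.

Delimit Scope nat_scope with N.

Theorem lemma7 (C : R) :
  (0 < C < 1)%R ->
  let eps := (1 / C - 1)%R in
  exists B : nat, forall b : nat, (B <= b)%N ->
    let k := num_colors eps b in
    forall (h : nat) (v : vtx b h),
      (prob_not_frozen b h k v <= Rpower (INR b) (- eps))%R.
Proof.
move=> HC eps; have [B HB] := num_final C HC; exists B => b Hb k h v.
have [Hk2 Hnum] := HB b (elimT leP Hb).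
set p := Rpower (INR b) (- eps).
have Hp : (0 <= p)%R by left; rewrite /p /Rpower; apply: exp_pos.
set m := h - depth v.
set w := word v.
have Hw : size w + m = h by rewrite /w word_size subnKC // depth_le.
have Hk2' : 2 <= k by apply/leP.
have HT := TCbound Hp Hnum m.
have HB2 := transfer_bound Hw Hp HT.
rewrite /prob_not_frozen.
set N := #|[set s | _ && ~~ frozen s v]|.
set D := #|[set s | _]|.
have HN : N <= #|[pred s : coloring b h k | Defs.proper s && ~~ rfr b k m (@Rr b h k m w s)]|.
  apply: subset_leq_card; apply/subsetP => s; rewrite !inE => /andP[-> Hf] /=.
  by apply: contra Hf; apply: rfr_frozen.
have HD : D = #|[pred s : coloring b h k | Defs.proper s]| by apply: eq_card => s; rewrite inE.
have HND : N <= D.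
  by apply: subset_leq_card; apply/subsetP => s; rewrite !inE => /andP[-> _].
case: (posnP D) => HD0.
  have HN0 : N = 0 by apply/eqP; rewrite -leqn0 -HD0.
  rewrite HN0 HD0 /= /Rdiv Rmult_0_l; exact: Hp.
have HDp : (0 < INR D)%R by apply: lt_0_INR; apply/ltP.
apply: (Rmult_le_reg_r (INR D)) => //.
rewrite /Rdiv Rmult_assoc Rinv_l ?Rmult_1_r; last by apply: Rgt_not_eq.
apply: Rle_trans (le_INR _ _ (elimT leP HN)) _.
by rewrite HD.
Qed.
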